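(* Let $f,g\in\mathcal{S}$ and $\tau\in\mathbb{C}$, $\tau\ne0$. Suppose there are $r_0\in(0,1)$ and $\varepsilon>0$ with $\sup_{r_0<|z|<1}|N_g(z)-N_f(z)|(1-|z|^2)<\varepsilon$. Let $\mathbf{h}=g\circ f^{-1}$. Then there exist constants $C_1,C_2>0$ such that $C_1\left(\frac{1-|z|}{1+|z|}\right)^{|\tau|\varepsilon/2}\le|[\mathbf{h}'\circ f(z)]^\tau|\le C_2\left(\frac{1+|z|}{1-|z|}\right)^{|\tau|\varepsilon/2}$ for all $z$ with $r_0<|z|<1$.
   Context: $\Delta$ unit disk; $\mathcal{S}$ the class of univalent $f$ on $\Delta$ with $f(0)=0,f'(0)=1$; $N_f=f''/f'$. Since $\mathbf{h}'\circ f=g'/f'$ is nonvanishing on $\Delta$ with value $1$ at $0$, $[\mathbf{h}'\circ f(z)]^\tau=\exp(\tau\log(\mathbf{h}'\circ f)(z))$ with the branch of the logarithm vanishing at $0$. *)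

(* Defs.v *)
From Stdlib Require Import Reals.
From Coquelicot Require Import Coquelicot.
Open Scope R_scope.

Definition cderiv (f : C -> C) (z l : C) : Prop :=
  is_derive (K:=C_AbsRing) (V:=C_NormedModule) f z l.

Definition in_disk (z : C) : Prop := Cmod z < 1.

Definition cexp (z : C) : C :=
  (exp (fst z) * cos (snd z), exp (fst z) * sin (snd z)).

Definition classS (f f1 f2 : C -> C) : Prop :=
  (forall z, in_disk z -> cderiv f z (f1 z)) /\
  (forall z, in_disk z -> cderiv f1 z (f2 z)) /\
  (forall z w, in_disk z -> in_disk w -> f z = f w -> z = w) /\
  f (RtoC 0) = RtoC 0 /\ f1 (RtoC 0) = RtoC 1.

Definition preSchw (f1 f2 : C -> C) (z : C) : C := Cdiv (f2 z) (f1 z).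

Definition cont_on_disk (L : C -> C) : Prop :=
  forall z, in_disk z -> continuous (T:=C_UniformSpace) (U:=C_UniformSpace) L z.

(* Main.v *)
Require Import Defs.
From Stdlib Require Import Reals Lra.
From Coquelicot Require Import Coquelicot.
Open Scope R_scope.

Lemma Cmod_le_sum (x : C) : Cmod x <= Rabs (fst x) + Rabs (snd x).
Proof.
  destruct x as [a b]; unfold Cmod; simpl.
  rewrite <- (sqrt_Rsqr (Rabs a + Rabs b)) by (generalize (Rabs_pos a) (Rabs_pos b); lra).
  apply sqrt_le_1_alt. unfold Rsqr.
  generalize (Rabs_pos a) (Rabs_pos b); intros.
  assert (a*a = Rabs a * Rabs a) by (rewrite <- Rabs_mult; rewrite Rabs_right; nra).
  assert (b*b = Rabs b * Rabs b) by (rewrite <- Rabs_mult; rewrite Rabs_right; nra).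
  nra.
Qed.

Lemma fst_le_Cmod (x : C) : Rabs (fst x) <= Cmod x.
Proof. generalize (Rmax_Cmod x). generalize (Rmax_l (Rabs (fst x)) (Rabs (snd x))). lra. Qed.
Lemma snd_le_Cmod (x : C) : Rabs (snd x) <= Cmod x.
Proof. generalize (Rmax_Cmod x). generalize (Rmax_r (Rabs (fst x)) (Rabs (snd x))). lra. Qed.

Lemma cont_eps (L : C -> C) (p : C) :
  continuous (T:=C_UniformSpace) (U:=C_UniformSpace) L p ->
  forall e, 0 < e -> exists d, 0 < d /\ forall z, Cmod (z - p) < d -> Cmod (L z - L p) < e.
Proof.
  intros H e He.
  assert (He2 : 0 < e/2) by lra.
  destruct (H _ (locally_ball (L p) (mkposreal _ He2))) as [d Hd].
  exists d; split; [apply cond_pos|].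
  intros z Hz.
  assert (Hb : ball p d z).
  { split; unfold ball; simpl; unfold AbsRing_ball, abs, minus, plus, opp; simpl.
    - generalize (fst_le_Cmod (z - p)); simpl. lra.
    - generalize (snd_le_Cmod (z - p)); simpl. lra. }
  specialize (Hd z Hb). destruct Hd as [H1 H2].
  unfold ball in H1, H2; simpl in H1, H2; unfold AbsRing_ball, abs, minus, plus, opp in H1, H2; simpl in H1, H2.
  eapply Rle_lt_trans; [apply Cmod_le_sum|]. simpl. lra.
Qed.

Definition hasderiv (F : C -> C) (p l : C) : Prop :=
  forall e, 0 < e -> exists d, 0 < d /\ forall z, Cmod (z - p) < d ->
    Cmod (F z - F p - (z - p) * l) <= e * Cmod (z - p).

Lemma deriv_eps (F : C -> C) (p l : C) : cderiv F p l -> hasderiv F p l.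
Proof.
  intros [_ H] e He.
  specialize (H p (fun P HP => HP) (mkposreal e He)).
  destruct H as [d Hd]. exists d; split; [apply cond_pos|].
  intros z Hz.
  specialize (Hd z Hz). simpl in Hd. exact Hd.
Qed.

Lemma dpl_eps (f : R -> R) (l : R) : derivable_pt_lim f 0 l ->
  forall e, 0 < e -> exists d, 0 < d /\ forall h, Rabs h < d -> Rabs (f h - f 0 - l * h) <= e * Rabs h.
Proof.
  intros H e He. destruct (H e He) as [d Hd].
  exists d; split; [apply cond_pos|]. intros h Hh.
  destruct (Req_dec h 0) as [->|Hn].
  - rewrite Rmult_0_r, Rminus_0_r, Rminus_diag, Rabs_R0. lra.
  - specialize (Hd h Hn Hh). rewrite Rplus_0_l in Hd.
    replace (f h - f 0 - l * h) with (((f h - f 0)/h - l) * h) by (field; auto).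
    rewrite Rabs_mult. apply Rmult_le_compat_r; [apply Rabs_pos|lra].
Qed.

Lemma cexp_small : forall e, 0 < e -> exists r, 0 < r /\ forall w,
  Cmod w < r -> Cmod (cexp w - 1 - w) <= e * Cmod w.
Proof.
  intros e0 He0.
  set (e := Rmin e0 1).
  assert (He : 0 < e) by (unfold e; apply Rmin_glb_lt; lra).
  assert (He1 : e <= 1) by (unfold e; apply Rmin_r).
  assert (Hee : e <= e0) by (unfold e; apply Rmin_l).
  assert (He6 : 0 < e/6) by lra.
  destruct (dpl_eps exp 1 derivable_pt_lim_exp_0 _ He6) as [d1 [Hd1 H1]].
  destruct (dpl_eps cos 0 derivable_pt_lim_cos_0 _ He6) as [d2 [Hd2 H2]].
  destruct (dpl_eps sin 1 derivable_pt_lim_sin_0 _ He6) as [d3 [Hd3 H3]].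
  rewrite exp_0 in H1. rewrite cos_0 in H2. rewrite sin_0 in H3.
  set (r := Rmin (Rmin d1 d2) (Rmin (Rmin d3 1) (e/24))).
  assert (Hr : 0 < r) by (unfold r; repeat apply Rmin_glb_lt; lra).
  assert (Hr1 : r <= d1) by (unfold r; eapply Rle_trans; [apply Rmin_l|apply Rmin_l]).
  assert (Hr2 : r <= d2) by (unfold r; eapply Rle_trans; [apply Rmin_l|apply Rmin_r]).
  assert (Hr3 : r <= d3) by (unfold r; eapply Rle_trans; [apply Rmin_r|]; eapply Rle_trans; apply Rmin_l).
  assert (Hr4 : r <= 1) by (unfold r; eapply Rle_trans; [apply Rmin_r|]; eapply Rle_trans; [apply Rmin_l| apply Rmin_r]).
  assert (Hr5 : r <= e/24) by (unfold r; eapply Rle_trans; [apply Rmin_r|]; apply Rmin_r).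
  exists r; split; auto.
  intros [a b] Hw.
  generalize (fst_le_Cmod (a,b)) (snd_le_Cmod (a,b)); simpl; intros Ha Hb.
  set (W := Cmod (a,b)) in *.
  specialize (H1 a ltac:(lra)). specialize (H2 b ltac:(lra)). specialize (H3 b ltac:(lra)).
  eapply Rle_trans; [apply Cmod_le_sum|]. simpl.
  replace (exp a * cos b + - (1) + - a) with ((exp a - 1 - 1 * a) * cos b + (1 + a) * (cos b - 1 - 0 * b)) by ring.
  replace (exp a * sin b + - 0 + - b) with ((exp a - 1 - 1*a + a) * sin b + (sin b - 0 - 1 * b)) by ring.
  assert (Hc : Rabs (cos b) <= 1) by apply Rabs_le, COS_bound.
  assert (Hs : Rabs (sin b) <= 2 * Rabs b).
  { replace (sin b) with ((sin b - 0 - 1 * b) + b) by ring.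
    eapply Rle_trans; [apply Rabs_triang|]. generalize (Rabs_pos b); nra. }
  assert (Ha1 : Rabs (1 + a) <= 2).
  { eapply Rle_trans; [apply Rabs_triang|]. rewrite Rabs_R1. lra. }
  assert (Hx : Rabs ((exp a - 1 - 1 * a) * cos b + (1 + a) * (cos b - 1 - 0 * b)) <= e/6 * Rabs a + 2 * (e/6 * Rabs b)).
  { eapply Rle_trans; [apply Rabs_triang|]. rewrite !Rabs_mult.
    apply Rplus_le_compat.
    - rewrite <- (Rmult_1_r (e/6 * Rabs a)). apply Rmult_le_compat; auto using Rabs_pos.
    - apply Rmult_le_compat; auto using Rabs_pos. }
  assert (Hy : Rabs ((exp a - 1 - 1*a + a) * sin b + (sin b - 0 - 1 * b)) <= 2 * Rabs a * (2 * Rabs b) + e/6 * Rabs b).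
  { eapply Rle_trans; [apply Rabs_triang|]. rewrite !Rabs_mult.
    apply Rplus_le_compat; [|auto].
    apply Rmult_le_compat; auto using Rabs_pos.
    eapply Rle_trans; [apply Rabs_triang|]. generalize (Rabs_pos a); nra. }
  generalize (Rabs_pos a) (Rabs_pos b); intros.
  assert (4 * Rabs a * Rabs b <= e/6 * W) by nra.
  assert (e * Rabs a <= e * W) by (apply Rmult_le_compat_l; lra).
  assert (e * Rabs b <= e * W) by (apply Rmult_le_compat_l; lra).
  assert (e * W <= e0 * W) by (apply Rmult_le_compat_r; [generalize (Rabs_pos a); lra| lra]).
  assert (0 <= e * W) by (apply Rmult_le_pos; generalize (Rabs_pos a); lra).
  lra.
Qed.

Lemma Cmod_sub (x y : C) : Cmod (x - y) <= Cmod x + Cmod y.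
Proof. unfold Cminus. rewrite <- (Cmod_opp y). apply Cmod_triangle. Qed.

Lemma cexp_add (a b : C) : cexp (a + b) = (cexp a * cexp b)%C.
Proof.
  destruct a as [a1 a2], b as [b1 b2]. unfold cexp; simpl.
  rewrite exp_plus, cos_plus, sin_plus. apply injective_projections; simpl; ring.
Qed.

Lemma Cmod_cexp (w : C) : Cmod (cexp w) = exp (fst w).
Proof.
  destruct w as [a b]. unfold cexp, Cmod; cbn [fst snd].
  replace ((exp a * cos b) ^ 2 + (exp a * sin b) ^ 2) with (exp a * exp a * (Rsqr (sin b) + Rsqr (cos b))) by (unfold Rsqr; ring).
  rewrite sin2_cos2, Rmult_1_r. apply sqrt_square. left; apply exp_pos.
Qed.

Lemma cexp_neq0 (w : C) : cexp w <> 0.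
Proof. apply Cmod_gt_0. rewrite Cmod_cexp. apply exp_pos. Qed.

Lemma div_eq_inv (x y w : C) : cexp w = Cdiv x y -> y <> 0 /\ x = (y * cexp w)%C.
Proof.
  intros H.
  assert (Hy : y <> 0).
  { intros ->. apply (cexp_neq0 w). rewrite H. unfold Cdiv, Cinv. simpl.
    apply injective_projections; simpl; unfold Rdiv; rewrite ?Rmult_0_l, ?Rmult_0_r, ?Rplus_0_r, ?Rinv_0; ring. }
  split; auto. rewrite H. field. auto.
Qed.

Lemma real_core (err w zp Dn x e : R) :
  0 <= err -> 0 <= w -> 0 <= zp -> 0 <= Dn -> 0 <= x -> x <= 1/2 -> 0 < e ->
  x * (2 * (1 + Dn)) <= e ->
  err <= x * (zp + w) -> w <= err + Dn * zp -> err <= e * zp.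
Proof.
  intros. assert (err <= x * zp + x * err + x * Dn * zp) by nra.
  assert ((1 - x) * err <= x * (1 + Dn) * zp) by nra.
  assert (err <= 2 * (x * (1 + Dn) * zp)) by nra.
  nra.
Qed.

Lemma logderiv (A B Lf : C -> C) (p a' b' D : C) :
  Cmod p < 1 ->
  (forall z, Cmod z < 1 -> B z = (A z * cexp (Lf z))%C) ->
  A p <> 0 ->
  hasderiv A p a' -> hasderiv B p b' ->
  continuous (T:=C_UniformSpace) (U:=C_UniformSpace) Lf p ->
  (D * (cexp (Lf p) * A p) = b' - cexp (Lf p) * a')%C ->
  hasderiv Lf p D.
Proof.
  intros Hp HB HAp dA dB cL HD e He.
  set (E := cexp (Lf p)) in *. set (Ap := A p) in *.
  assert (HE : 0 < Cmod E) by (apply Cmod_gt_0, cexp_neq0).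
  assert (HA : 0 < Cmod Ap) by (apply Cmod_gt_0; auto).
  set (K0 := Cmod E * Cmod Ap).
  assert (HK0 : 0 < K0) by (unfold K0; nra).
  set (c := (1 + Cmod E + Cmod E * (Cmod Ap + 1)) / K0).
  assert (Hc : 0 < c) by (unfold c; apply Rdiv_lt_0_compat; [nra|auto]).
  set (Dn := Cmod D). assert (HDn : 0 <= Dn) by apply Cmod_ge_0.
  set (e' := Rmin (1/2) (e / (2 * (1 + Dn)))).
  assert (He' : 0 < e') by (unfold e'; apply Rmin_glb_lt; [lra| apply Rdiv_lt_0_compat; lra]).
  assert (He'1 : e' <= 1/2) by apply Rmin_l.
  assert (He'2 : e' * (2 * (1 + Dn)) <= e).
  { unfold e'. apply (Rmult_le_reg_r (/ (2 * (1 + Dn)))). apply Rinv_0_lt_compat; lra.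
    rewrite Rmult_assoc, Rinv_r by lra. rewrite Rmult_1_r. apply Rmin_r. }
  set (eta := Rmin 1 (e' / c)).
  assert (Heta : 0 < eta) by (unfold eta; apply Rmin_glb_lt; [lra| apply Rdiv_lt_0_compat; lra]).
  assert (Heta1 : eta <= 1) by apply Rmin_l.
  assert (Hetac : eta * c <= e').
  { apply (Rmult_le_reg_r (/ c)). apply Rinv_0_lt_compat; lra.
    rewrite Rmult_assoc, Rinv_r by lra. rewrite Rmult_1_r. apply Rmin_r. }
  destruct (dA eta Heta) as [d1 [Hd1 H1]].
  destruct (dB eta Heta) as [d2 [Hd2 H2]].
  destruct (dA 1 ltac:(lra)) as [d3 [Hd3 H3]].
  destruct (cexp_small eta Heta) as [rc [Hrc Hcx]].
  destruct (cont_eps Lf p cL rc Hrc) as [d4 [Hd4 H4]].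
  set (d5 := eta / (Cmod a' + 1)).
  assert (Hd5 : 0 < d5) by (unfold d5; apply Rdiv_lt_0_compat; generalize (Cmod_ge_0 a'); lra).
  exists (Rmin (Rmin (Rmin d1 d2) (Rmin d3 d4)) (Rmin d5 (1 - Cmod p))).
  split. { repeat apply Rmin_glb_lt; lra. }
  intros z Hz.
  assert (Hz1 : Cmod (z - p) < d1) by (eapply Rlt_le_trans; [exact Hz|]; eapply Rle_trans; [apply Rmin_l|]; eapply Rle_trans; apply Rmin_l).
  assert (Hz2 : Cmod (z - p) < d2) by (eapply Rlt_le_trans; [exact Hz|]; eapply Rle_trans; [apply Rmin_l|]; eapply Rle_trans; [apply Rmin_l|apply Rmin_r]).
  assert (Hz3 : Cmod (z - p) < d3) by (eapply Rlt_le_trans; [exact Hz|]; eapply Rle_trans; [apply Rmin_l|]; eapply Rle_trans; [apply Rmin_r|apply Rmin_l]).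
  assert (Hz4 : Cmod (z - p) < d4) by (eapply Rlt_le_trans; [exact Hz|]; eapply Rle_trans; [apply Rmin_l|]; eapply Rle_trans; [apply Rmin_r|apply Rmin_r]).
  assert (Hz5 : Cmod (z - p) < d5) by (eapply Rlt_le_trans; [exact Hz|]; eapply Rle_trans; [apply Rmin_r|apply Rmin_l]).
  assert (Hz6 : Cmod (z - p) < 1 - Cmod p) by (eapply Rlt_le_trans; [exact Hz|]; eapply Rle_trans; [apply Rmin_r|apply Rmin_r]).
  set (zp := Cmod (z - p)) in *.
  assert (Hzd : Cmod z < 1).
  { replace z with ((z - p) + p)%C by ring. eapply Rle_lt_trans; [apply Cmod_triangle|]. fold zp. lra. }
  set (w := (Lf z - Lf p)%C).
  assert (Hw : Cmod w < rc) by (apply H4; exact Hz4).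
  specialize (Hcx w Hw).
  specialize (H1 z Hz1). specialize (H2 z Hz2). specialize (H3 z Hz3).
  assert (HBz : B z = (A z * (E * cexp w))%C).
  { rewrite HB by auto. unfold E, w. rewrite <- cexp_add. f_equal. f_equal. ring. }
  assert (HBp : B p = (Ap * E)%C).
  { rewrite HB by auto. unfold Ap, E. ring. }
  assert (Hb' : b' = (D * (E * Ap) + E * a')%C) by (rewrite HD; ring).
  assert (Hid : (E * Ap * (w - (z - p) * D) =
     (B z - B p - (z - p) * b') - E * (A z - A p - (z - p) * a')
     - E * (A z - A p) * w - E * A z * (cexp w - 1 - w))%C).
  { rewrite HBz, HBp, Hb'. fold Ap. ring. }
  assert (HdA : Cmod (A z - Ap) <= eta).
  { replace (A z - Ap)%C with ((A z - A p - (z - p) * a') + (z - p) * a')%C by (unfold Ap; ring).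
    eapply Rle_trans; [apply Cmod_triangle|]. rewrite Cmod_mult.
    fold zp. assert (zp * Cmod a' <= zp * Cmod a') by lra.
    assert (zp * (Cmod a' + 1) <= eta).
    { unfold d5 in Hz5. apply Rlt_le in Hz5.
      apply (Rmult_le_compat_r (Cmod a' + 1)) in Hz5; [|generalize (Cmod_ge_0 a'); lra].
      unfold Rdiv in Hz5. rewrite Rmult_assoc, Rinv_l in Hz5 by (generalize (Cmod_ge_0 a'); lra). lra. }
    generalize H3; fold zp; intro. lra. }
  assert (HAz : Cmod (A z) <= Cmod Ap + 1).
  { replace (A z) with ((A z - Ap) + Ap)%C by ring. eapply Rle_trans; [apply Cmod_triangle|]. lra. }
  set (err := (w - (z - p) * D)%C) in *.
  assert (Herr : K0 * Cmod err <= eta * zp + Cmod E * (eta * zp) + Cmod E * eta * Cmod w + Cmod E * (Cmod Ap + 1) * (eta * Cmod w)).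
  { unfold K0. rewrite <- Cmod_mult, <- Cmod_mult, Hid.
    eapply Rle_trans; [apply Cmod_sub|]. apply Rplus_le_compat.
    eapply Rle_trans; [apply Cmod_sub|]. apply Rplus_le_compat.
    eapply Rle_trans; [apply Cmod_sub|]. apply Rplus_le_compat. exact H2.
    rewrite Cmod_mult. apply Rmult_le_compat_l; [apply Cmod_ge_0|exact H1].
    rewrite !Cmod_mult. apply Rmult_le_compat_r; [apply Cmod_ge_0|]. apply Rmult_le_compat_l; [apply Cmod_ge_0|exact HdA].
    rewrite !Cmod_mult. apply Rmult_le_compat; [apply Rmult_le_pos; apply Cmod_ge_0 | apply Cmod_ge_0 | apply Rmult_le_compat_l; [apply Cmod_ge_0|exact HAz] | exact Hcx]. }
  assert (Herr2 : Cmod err <= (eta * c) * (zp + Cmod w)).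
  { apply (Rmult_le_reg_l K0); auto.
    eapply Rle_trans; [exact Herr|]. unfold c.
    replace (K0 * (eta * ((1 + Cmod E + Cmod E * (Cmod Ap + 1)) / K0) * (zp + Cmod w)))
      with (eta * (1 + Cmod E + Cmod E * (Cmod Ap + 1)) * (zp + Cmod w)) by (field; lra).
    generalize (Cmod_ge_0 w) (Cmod_ge_0 (z - p)) (Cmod_ge_0 E) (Cmod_ge_0 Ap); fold zp; intros.
    assert (0 <= eta * Cmod E * zp) by (repeat apply Rmult_le_pos; lra).
    assert (0 <= eta * Cmod w) by (repeat apply Rmult_le_pos; lra).
    assert (0 <= eta * Cmod E * Cmod Ap * zp) by (repeat apply Rmult_le_pos; lra).
    lra. }
  assert (Hwb : Cmod w <= Cmod err + Dn * zp).
  { replace w with (err + (z - p) * D)%C by (unfold err; ring).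
    eapply Rle_trans; [apply Cmod_triangle|]. rewrite Cmod_mult. unfold Dn, zp. lra. }
  assert (0 <= zp) by apply Cmod_ge_0.
  assert (0 <= eta * c) by (apply Rmult_le_pos; lra).
  apply (real_core (Cmod err) (Cmod w) zp Dn (eta * c) e); auto; try apply Cmod_ge_0; try lra.
  eapply Rle_trans; [|exact He'2]. apply Rmult_le_compat_r; lra.
Qed.

Lemma fst_lin (a b c : C) (h : R) : fst (a + RtoC h * b + c)%C = fst a + h * fst b + fst c.
Proof. destruct a, b, c; simpl; ring. Qed.

Lemma ray_deriv (L : C -> C) (Dp : C) (tau u : C) (t : R) :
  hasderiv L (RtoC t * u) Dp -> Cmod u = 1 ->
  derivable_pt_lim (fun s => fst (tau * L (RtoC s * u))%C) t (fst (tau * u * Dp)%C).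
Proof.
  intros H Hu eps Heps.
  set (e' := eps / (2 * (Cmod tau + 1))).
  assert (He' : 0 < e') by (unfold e'; apply Rdiv_lt_0_compat; generalize (Cmod_ge_0 tau); lra).
  destruct (H e' He') as [d [Hd Hz]].
  exists (mkposreal d Hd). intros h Hh Hhd. simpl in Hhd.
  assert (Hzp : (RtoC (t + h) * u - RtoC t * u)%C = (RtoC h * u)%C).
  { rewrite RtoC_plus. ring. }
  assert (Hm : Cmod (RtoC h * u) = Rabs h) by (rewrite Cmod_mult, Hu, Cmod_R; ring).
  specialize (Hz (RtoC (t + h) * u)%C). rewrite Hzp, Hm in Hz. specialize (Hz Hhd).
  set (X := (L (RtoC (t + h) * u) - L (RtoC t * u) - RtoC h * u * Dp)%C) in *.
  assert (HE : (tau * L (RtoC (t + h) * u))%C = (tau * L (RtoC t * u) + RtoC h * (tau * u * Dp) + tau * X)%C)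
    by (unfold X; ring).
  rewrite HE, fst_lin.
  replace ((fst (tau * L (RtoC t * u))%C + h * fst (tau * u * Dp)%C + fst (tau * X)%C -
     fst (tau * L (RtoC t * u))%C) / h - fst (tau * u * Dp)%C) with (fst (tau * X)%C / h) by (field; auto).
  unfold Rdiv. rewrite Rabs_mult, Rabs_inv.
  apply (Rmult_lt_reg_r (Rabs h)). apply Rabs_pos_lt; auto.
  rewrite Rmult_assoc, Rinv_l by (apply Rabs_no_R0; auto). rewrite Rmult_1_r.
  eapply Rle_lt_trans; [apply fst_le_Cmod|]. rewrite Cmod_mult.
  assert (Cmod tau * Cmod X <= Cmod tau * (e' * Rabs h)) by (apply Rmult_le_compat_l; [apply Cmod_ge_0|auto]).
  assert (Cmod tau * e' < eps).
  { unfold e'. generalize (Cmod_ge_0 tau); intro.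
    replace (Cmod tau * (eps / (2 * (Cmod tau + 1)))) with (eps * (Cmod tau / (2 * (Cmod tau + 1)))) by (field; lra).
    assert (Cmod tau / (2 * (Cmod tau + 1)) < 1).
    { apply (Rmult_lt_reg_r (2 * (Cmod tau + 1))); [lra|]. unfold Rdiv. rewrite Rmult_assoc, Rinv_l by lra. lra. }
    nra. }
  assert (0 < Rabs h) by (apply Rabs_pos_lt; auto).
  nra.
Qed.

Definition ell (t : R) := ln (1 + t) - ln (1 - t).

Lemma ell_deriv (t : R) : -1 < t < 1 -> derivable_pt_lim ell t (2 / (1 - t^2)).
Proof.
  intros Ht. apply is_derive_Reals. unfold ell. auto_derive.
  - lra.
  - field. repeat split; try lra. intro; nra.
Qed.

Lemma ell_nonneg (t : R) : 0 <= t < 1 -> 0 <= ell t.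
Proof.
  intros Ht. unfold ell.
  destruct (Req_dec t 0) as [->|Hn].
  - rewrite Rplus_0_r, Rminus_0_r. lra.
  - assert (ln (1 - t) < ln 1) by (apply ln_increasing; lra).
    assert (ln 1 < ln (1 + t)) by (apply ln_increasing; lra).
    lra.
Qed.

Lemma ray_bound (rho Dr : R -> R) (r0 r k : R) :
  0 < r0 -> r0 < r -> r < 1 -> 0 <= k ->
  (forall c, r0 <= c <= r -> derivable_pt_lim rho c (Dr c)) ->
  (forall c, r0 < c < r -> Rabs (Dr c) <= k * (2 / (1 - c^2))) ->
  Rabs (rho r - rho r0) <= k * (ell r - ell r0).
Proof.
  intros H0 H1 H2 Hk Hd Hb.
  destruct (MVT_cor2 (fun t => rho t - k * ell t) (fun t => Dr t - k * (2 / (1 - t^2))) r0 r H1)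
    as [c [Hc1 Hc2]].
  { intros c Hc. apply derivable_pt_lim_minus; auto.
    apply derivable_pt_lim_scal. apply ell_deriv. lra. }
  destruct (MVT_cor2 (fun t => rho t + k * ell t) (fun t => Dr t + k * (2 / (1 - t^2))) r0 r H1)
    as [c' [Hc1' Hc2']].
  { intros c0 Hc. apply derivable_pt_lim_plus; auto.
    apply derivable_pt_lim_scal. apply ell_deriv. lra. }
  specialize (Hb c Hc2) as Hb1. specialize (Hb c' Hc2') as Hb2.
  generalize (Rle_abs (Dr c)) (Rabs_maj2 (Dr c)) (Rle_abs (Dr c')) (Rabs_maj2 (Dr c')); intros.
  apply Rabs_le. split.
  - assert (0 <= (Dr c' + k * (2 / (1 - c' ^ 2))) * (r - r0)) by (apply Rmult_le_pos; lra).
    lra.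
  - assert ((Dr c - k * (2 / (1 - c ^ 2))) * (r - r0) <= 0).
    { apply Rmult_le_0_r; lra. }
    lra.
Qed.

Definition uvec (s x : R) : C := (x, s * sqrt (1 - x^2)).
Definition Pt (r0 s x : R) : C := (RtoC r0 * uvec s x)%C.

Lemma Cmod_unit_pt (s x : R) : s * s = 1 -> -1 <= x <= 1 -> Cmod (x, s * sqrt (1 - x^2)) = 1.
Proof.
  intros Hs Hx. unfold Cmod; cbn [fst snd].
  replace ((s * sqrt (1 - x ^ 2)) ^ 2) with (s * s * (sqrt (1 - x^2) * sqrt (1 - x^2))) by ring.
  rewrite sqrt_sqrt by nra. rewrite Hs. replace (x ^ 2 + 1 * (1 - x ^ 2)) with 1 by ring. apply sqrt_1.
Qed.

Lemma hs_cont (L : C -> C) (tau : C) (r0 s x0 : R) :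
  0 < r0 < 1 -> s * s = 1 -> -1 <= x0 <= 1 -> cont_on_disk L ->
  continuity_pt (fun x => fst (tau * L (Pt r0 s x))%C) x0.
Proof.
  intros Hr Hs Hx HL.
  assert (Hp : in_disk (Pt r0 s x0)).
  { unfold in_disk, Pt. unfold uvec. rewrite Cmod_mult, Cmod_unit_pt, Cmod_R by auto. rewrite Rabs_right; lra. }
  assert (Hsq : continuity_pt (fun x => sqrt (1 - x^2)) x0).
  { apply (continuity_pt_comp (fun x => 1 - x^2) sqrt). reg. apply continuity_pt_sqrt. nra. }
  assert (Habs : Rabs s = 1).
  { destruct (Rle_dec 0 s). rewrite Rabs_right; nra. rewrite Rabs_left; nra. }
  unfold continuity_pt, continue_in, limit1_in, limit_in in *. cbn [dist R_met] in *. unfold R_dist in *.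
  intros eps Heps.
  set (e' := eps / (Cmod tau + 1)).
  assert (He' : 0 < e') by (unfold e'; apply Rdiv_lt_0_compat; generalize (Cmod_ge_0 tau); lra).
  destruct (cont_eps L _ (HL _ Hp) e' He') as [dL [HdL HL']].
  destruct (Hsq (dL/2) ltac:(lra)) as [d2 [Hd2 H2]].
  exists (Rmin (dL/2) d2). split; [apply Rmin_glb_lt; lra|].
  intros x [[_ Hxn] Hxd].
  assert (Hx1 : Rabs (x - x0) < dL/2) by (eapply Rlt_le_trans; [exact Hxd| apply Rmin_l]).
  assert (Hx2 : Rabs (x - x0) < d2) by (eapply Rlt_le_trans; [exact Hxd| apply Rmin_r]).
  specialize (H2 x (conj (conj I Hxn) Hx2)).
  assert (HC : Cmod (Pt r0 s x - Pt r0 s x0) < dL).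
  { unfold Pt. replace (RtoC r0 * uvec s x - RtoC r0 * uvec s x0)%C
      with (RtoC r0 * ((x - x0)%R, (s * (sqrt (1 - x ^ 2) - sqrt (1 - x0 ^ 2)))%R))%C
      by (unfold uvec; apply injective_projections; simpl; ring).
    rewrite Cmod_mult, Cmod_R, Rabs_right by lra.
    eapply Rle_lt_trans. apply Rmult_le_compat_l; [lra|apply Cmod_le_sum].
    cbn [fst snd]. rewrite Rabs_mult, Habs.
    generalize (Rabs_pos (x - x0)) (Rabs_pos (sqrt (1 - x ^ 2) - sqrt (1 - x0 ^ 2))); intros. nra. }
  specialize (HL' _ HC).
  replace (fst (tau * L (Pt r0 s x))%C - fst (tau * L (Pt r0 s x0))%C)
    with (fst (tau * (L (Pt r0 s x) - L (Pt r0 s x0)))%C) by (simpl; ring).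
  eapply Rle_lt_trans; [apply fst_le_Cmod|]. rewrite Cmod_mult.
  generalize (Cmod_ge_0 tau) (Cmod_ge_0 (L (Pt r0 s x) - L (Pt r0 s x0))); intros.
  assert (Cmod tau * e' < eps).
  { unfold e'. replace (Cmod tau * (eps / (Cmod tau + 1))) with (eps * (Cmod tau / (Cmod tau + 1))) by (field; lra).
    assert (Cmod tau / (Cmod tau + 1) < 1).
    { apply (Rmult_lt_reg_r (Cmod tau + 1)); [lra|]. unfold Rdiv. rewrite Rmult_assoc, Rinv_l by lra. lra. }
    nra. }
  nra.
Qed.

Lemma branch_bound (L : C -> C) (tau : C) (r0 s : R) :
  0 < r0 < 1 -> s * s = 1 -> cont_on_disk L ->
  exists K, forall x, -1 <= x <= 1 -> Rabs (fst (tau * L (Pt r0 s x))%C) <= K.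
Proof.
  intros Hr Hs HL.
  assert (Hc : forall c, -1 <= c <= 1 -> continuity_pt (fun x => fst (tau * L (Pt r0 s x))%C) c)
    by (intros; apply hs_cont; auto).
  destruct (continuity_ab_maj _ (-1) 1 ltac:(lra) Hc) as [M [HM _]].
  destruct (continuity_ab_min _ (-1) 1 ltac:(lra) Hc) as [m [Hm _]].
  exists (Rabs (fst (tau * L (Pt r0 s M))%C) + Rabs (fst (tau * L (Pt r0 s m))%C)).
  intros x Hx. specialize (HM x Hx). specialize (Hm x Hx). cbv beta in HM, Hm.
  apply Rabs_le.
  generalize (Rle_abs (fst (tau * L (Pt r0 s M))%C)) (Rabs_maj2 (fst (tau * L (Pt r0 s m))%C))
    (Rabs_pos (fst (tau * L (Pt r0 s M))%C)) (Rabs_pos (fst (tau * L (Pt r0 s m))%C)). lra.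
Qed.

Lemma circle_bound (L : C -> C) (tau : C) (r0 : R) :
  0 < r0 < 1 -> cont_on_disk L ->
  exists K, forall u, Cmod u = 1 -> Rabs (fst (tau * L (RtoC r0 * u))%C) <= K.
Proof.
  intros Hr HL.
  destruct (branch_bound L tau r0 1 Hr ltac:(ring) HL) as [K1 HK1].
  destruct (branch_bound L tau r0 (-1) Hr ltac:(ring) HL) as [K2 HK2].
  exists (Rmax K1 K2). intros [a b] Hu.
  assert (Hab : a^2 + b^2 = 1).
  { unfold Cmod in Hu; cbn [fst snd] in Hu.
    rewrite <- (sqrt_sqrt (a^2+b^2)) by nra. rewrite Hu. ring. }
  assert (Ha : -1 <= a <= 1) by nra.
  destruct (Rle_dec 0 b) as [Hb|Hb].
  - assert (Heq : b = 1 * sqrt (1 - a^2)).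
    { rewrite Rmult_1_l. replace (1 - a^2) with (b^2) by lra. rewrite <- sqrt_pow2 at 1 by auto. reflexivity. }
    rewrite Heq. change (a, 1 * sqrt (1 - a^2)) with (uvec 1 a). eapply Rle_trans; [apply HK1; auto| apply Rmax_l].
  - assert (Heq : b = -1 * sqrt (1 - a^2)).
    { replace (1 - a^2) with ((-b)^2) by lra. rewrite sqrt_pow2 by lra. ring. }
    rewrite Heq. change (a, -1 * sqrt (1 - a^2)) with (uvec (-1) a). eapply Rle_trans; [apply HK2; auto| apply Rmax_r].
Qed.

Lemma exp_le (x y : R) : x <= y -> exp x <= exp y.
Proof. intros [H|H]; [left; apply exp_increasing; auto| right; subst; auto]. Qed.

Lemma ln_quot (x y : R) : 0 < x -> 0 < y -> ln (x / y) = ln x - ln y.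
Proof. intros. unfold Rdiv. rewrite ln_mult, ln_Rinv; try lra. apply Rinv_0_lt_compat; auto. Qed.

Theorem mainTheorem10
  (f f1 f2 g g1 g2 : C -> C) (tau : C) (r0 eps : R)
  (Hf : classS f f1 f2) (Hg : classS g g1 g2)
  (Htau : tau <> RtoC 0)
  (Hr0 : 0 < r0 < 1) (Heps : 0 < eps)
  (Hsup : exists M : R, M < eps /\
     forall z : C, r0 < Cmod z < 1 ->
       Cmod (Cminus (preSchw g1 g2 z) (preSchw f1 f2 z)) * (1 - Cmod z ^ 2) <= M)
  (L : C -> C) (HLc : cont_on_disk L) (HL0 : L (RtoC 0) = RtoC 0)
  (HLexp : forall z, in_disk z -> cexp (L z) = Cdiv (g1 z) (f1 z)) :
  exists C1 C2 : R, 0 < C1 /\ 0 < C2 /\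
    forall z : C, r0 < Cmod z < 1 ->
      C1 * Rpower ((1 - Cmod z) / (1 + Cmod z)) (Cmod tau * eps / 2)
        <= Cmod (cexp (Cmult tau (L z))) /\
      Cmod (cexp (Cmult tau (L z)))
        <= C2 * Rpower ((1 + Cmod z) / (1 - Cmod z)) (Cmod tau * eps / 2).
Proof.
  destruct Hf as [_ [df1 _]]. destruct Hg as [_ [dg1 _]].
  destruct Hsup as [M [HM Hsup]].
  set (D := fun p => Cminus (preSchw g1 g2 p) (preSchw f1 f2 p)).
  assert (HLd : forall p, Cmod p < 1 -> hasderiv L p (D p)).
  { intros p Hp.
    destruct (div_eq_inv _ _ _ (HLexp p Hp)) as [Hf1 Hg1eq].
    apply (logderiv f1 g1 L p (f2 p) (g2 p) (D p)); auto.
    - intros z Hz. destruct (div_eq_inv _ _ _ (HLexp z Hz)); auto.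
    - apply deriv_eps, df1; auto.
    - apply deriv_eps, dg1; auto.
    - unfold D, preSchw, Cdiv. rewrite Hg1eq. field. split; auto. apply cexp_neq0. }
  destruct (circle_bound L tau r0 Hr0 HLc) as [K HK].
  set (k := Cmod tau * eps / 2).
  assert (Hk : 0 <= k) by (unfold k; generalize (Cmod_ge_0 tau); intro; nra).
  exists (exp (- K)), (exp K). split; [apply exp_pos|]. split; [apply exp_pos|].
  intros z [Hz1 Hz2].
  set (r := Cmod z) in *.
  assert (Hr : 0 < r) by lra.
  set (u := (RtoC (/ r) * z)%C).
  assert (Hu : Cmod u = 1).
  { unfold u. rewrite Cmod_mult, Cmod_R, Rabs_right. fold r. field. lra.
    left. apply Rinv_0_lt_compat; auto. }
  assert (Hru : (RtoC r * u)%C = z).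
  { unfold u. rewrite Cmult_assoc, <- RtoC_mult, Rinv_r by lra. apply Cmult_1_l. }
  assert (Hcu : forall c, 0 <= c -> Cmod (RtoC c * u) = c).
  { intros c Hc. rewrite Cmod_mult, Hu, Cmod_R, Rabs_right; lra. }
  assert (Hb := ray_bound (fun t => fst (tau * L (RtoC t * u))%C)
                          (fun t => fst (tau * u * D (RtoC t * u))%C) r0 r k
                          ltac:(lra) Hz1 Hz2 Hk).
  cbv beta in Hb.
  assert (Hb' : Rabs (fst (tau * L (RtoC r * u))%C - fst (tau * L (RtoC r0 * u))%C) <= k * (ell r - ell r0)).
  { apply Hb.
    - intros c Hc. apply ray_deriv; auto. apply HLd. rewrite Hcu; lra.
    - intros c Hc.
      eapply Rle_trans; [apply fst_le_Cmod|].
      rewrite !Cmod_mult, Hu, Rmult_1_r.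
      specialize (Hsup (RtoC c * u)%C). rewrite Hcu in Hsup by lra.
      specialize (Hsup ltac:(lra)). fold (D (RtoC c * u)%C) in Hsup.
      assert (H1c : 0 < 1 - c^2) by nra.
      assert (HDc : Cmod (D (RtoC c * u)%C) <= eps / (1 - c^2)).
      { apply (Rmult_le_reg_r (1 - c^2)); auto. unfold Rdiv. rewrite Rmult_assoc, Rinv_l by lra. lra. }
      unfold k. replace (Cmod tau * eps / 2 * (2 / (1 - c ^ 2))) with (Cmod tau * (eps / (1 - c^2))) by (field; lra).
      apply Rmult_le_compat_l; [apply Cmod_ge_0|auto]. }
  rewrite Hru in Hb'.
  specialize (HK u Hu).
  assert (Hl0 : 0 <= ell r0) by (apply ell_nonneg; lra).
  assert (Hkl : 0 <= k * ell r0) by (apply Rmult_le_pos; auto).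
  set (x := fst (tau * L z)%C) in *. set (x0 := fst (tau * L (RtoC r0 * u))%C) in *.
  assert (Hx1 : x <= K + k * ell r).
  { generalize (Rle_abs (x - x0)) (Rle_abs x0). lra. }
  assert (Hx2 : - K - k * ell r <= x).
  { generalize (Rabs_maj2 (x - x0)) (Rabs_maj2 x0). lra. }
  rewrite Cmod_cexp. fold x.
  unfold Rpower. rewrite !ln_quot by lra.
  rewrite <- !exp_plus. split; apply exp_le; unfold ell in *; fold k; lra.
Qed.
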